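(* Let $m$ be a positive integer and $\theta_1,\dots,\theta_{2m}$ pairwise distinct numbers in $(0,\pi)$ with $\theta_{2m+1-i}=\pi-\theta_i$ for $i=1,\dots,m$. For $\alpha\in\{0,1\}$ let $\phi_j^\alpha=(2j+\alpha)\pi/(2m)$, and for $i=1,\dots,2m$ let $$w_i=\int_{-1}^1\prod_{k=1,k\ne i}^{2m}\frac{t-\cos\theta_k}{\cos\theta_i-\cos\theta_k}\,dt.$$ Then for every $T\in\Pi_{2m-1}(\mathbb{S}^2)$, $$\int_{\mathbb{S}^2}T(\xi)\,d\omega(\xi)=\frac{\pi}{m}\sum_{i=1}^m w_i\sum_{j=0}^{2m-1}\widetilde T(\theta_i,\phi_j^0)+\frac{\pi}{m}\sum_{i=m+1}^{2m}w_i\sum_{j=0}^{2m-1}\widetilde T(\theta_i,\phi_j^1).$$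
   Context: $\mathbb{S}^2$ is the unit sphere in $\mathbb{R}^3$ and $d\omega$ its surface area measure, so that $\int_{\mathbb{S}^2}T\,d\omega=\int_0^\pi\int_0^{2\pi}\widetilde T(\theta,\phi)\sin\theta\,d\phi\,d\theta$. $\Pi_n(\mathbb{S}^2)$ is the space of restrictions to $\mathbb{S}^2$ of real polynomials in $x,y,z$ of total degree at most $n$, and $\widetilde T(\theta,\phi)=T(\sin\theta\cos\phi,\sin\theta\sin\phi,\cos\theta)$. *)

(* Defs.v *)
From Stdlib Require Import Reals Lra Lia List.
From Coquelicot Require Import Coquelicot.
Open Scope R_scope.

Definition sumR (f : nat -> R) (a b : nat) : R := sum_n_m f a b.

Definition prodR (l : list nat) (f : nat -> R) : R :=
  fold_right (fun k acc => f k * acc) 1 l.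

Definition poly3 (n : nat) (c : nat -> nat -> nat -> R) (x y z : R) : R :=
  sumR (fun a => sumR (fun b => sumR (fun d =>
    if (a + b + d <=? n)%nat then c a b d * x ^ a * y ^ b * z ^ d else 0)
    0 n) 0 n) 0 n.

(* T : R^3 -> R belongs to Pi_n(S^2): its restriction to the unit sphere
   is the restriction of a polynomial of total degree <= n *)
Definition in_Pi (n : nat) (T : R -> R -> R -> R) : Prop :=
  exists c : nat -> nat -> nat -> R,
    forall x y z, x ^ 2 + y ^ 2 + z ^ 2 = 1 -> T x y z = poly3 n c x y z.

Definition Ttilde (T : R -> R -> R -> R) (th ph : R) : R :=
  T (sin th * cos ph) (sin th * sin ph) (cos th).

Definition sphere_integral (T : R -> R -> R -> R) : R :=
  RInt (fun th => RInt (fun ph => Ttilde T th ph * sin th) 0 (2 * PI)) 0 PI.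

Definition weight (m : nat) (theta : nat -> R) (i : nat) : R :=
  RInt (fun t => prodR (filter (fun k => negb (Nat.eqb k i)) (seq 1 (2 * m)))
                   (fun k => (t - cos (theta k)) / (cos (theta i) - cos (theta k))))
       (-1) 1.

Definition phi (m : nat) (alpha : nat) (j : nat) : R :=
  (2 * INR j + INR alpha) * PI / (2 * INR m).

(* Main.v *)
Require Import Defs.
From Stdlib Require Import Reals Lra Lia List Arith.
From Coquelicot Require Import Coquelicot.
Open Scope R_scope.

Lemma sumR_Sm f a b : (a <= S b)%nat -> sumR f a (S b) = sumR f a b + f (S b).
Proof. intros; unfold sumR; rewrite sum_n_Sm; auto. Qed.
Lemma sumR_nn f a : sumR f a a = f a.
Proof. unfold sumR; apply sum_n_n. Qed.
Lemma sumR_lt f a b : (b < a)%nat -> sumR f a b = 0.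
Proof. intros; unfold sumR; rewrite sum_n_m_zero; auto. Qed.
Lemma sumR_ext f g a b : (forall k, (a <= k <= b)%nat -> f k = g k) -> sumR f a b = sumR g a b.
Proof. intros; unfold sumR; apply sum_n_m_ext_loc; auto. Qed.
Lemma sumR_plus f g a b : sumR (fun k => f k + g k) a b = sumR f a b + sumR g a b.
Proof. unfold sumR; apply (sum_n_m_plus (G:=R_AbelianMonoid)). Qed.
Lemma sumR_scal c f a b : sumR (fun k => c * f k) a b = c * sumR f a b.
Proof. unfold sumR; apply (sum_n_m_mult_l (K:=R_Ring)). Qed.
Lemma sumR_const c a b : sumR (fun _ => c) a b = INR (S b - a) * c.
Proof. unfold sumR; apply sum_n_m_const. Qed.
Lemma sumR_Chasles f a m b : (a <= S m)%nat -> (m <= b)%nat ->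
  sumR f a b = sumR f a m + sumR f (S m) b.
Proof. intros; unfold sumR; rewrite (sum_n_m_Chasles f a m b); auto. Qed.

Lemma sumR_closed (Pr : (R -> R) -> Prop) (F : nat -> R -> R) a b :
  Pr (fun _ => 0) ->
  (forall f g, Pr f -> Pr g -> Pr (fun x => f x + g x)) ->
  (forall f g, (forall x, f x = g x) -> Pr f -> Pr g) ->
  (forall k, Pr (F k)) ->
  Pr (fun x => sumR (fun k => F k x) a b).
Proof.
  intros H0 Hp He HF. induction b.
  - destruct a.
    + eapply He; [|apply (HF 0%nat)]. intros; simpl; rewrite sumR_nn; auto.
    + eapply He; [|apply H0]. intros; rewrite sumR_lt; auto; lia.
  - destruct (le_lt_dec a (S b)).
    + destruct (Nat.eq_dec a (S b)).
      * subst. eapply He; [|apply HF]. intros; simpl; rewrite sumR_nn; auto.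
      * eapply He; [|apply (Hp _ _ IHb (HF (S b)))]. intros; simpl; rewrite sumR_Sm; auto.
    + eapply He; [|apply H0]. intros; rewrite sumR_lt; auto.
Qed.

Lemma sumR_single f a b l : (a <= l <= b)%nat ->
  (forall k, (a <= k <= b)%nat -> k <> l -> f k = 0) -> sumR f a b = f l.
Proof.
  intros Hl Hz. induction b.
  - assert (a = 0 /\ l = 0)%nat as [-> ->] by lia. apply sumR_nn.
  - destruct (Nat.eq_dec l (S b)).
    + subst. destruct (Nat.eq_dec a (S b)). subst; apply sumR_nn.
      rewrite sumR_Sm by lia. rewrite (sumR_ext _ (fun _ => 0)).
      rewrite sumR_const; ring. intros; apply Hz; lia.
    + rewrite sumR_Sm by lia. rewrite IHb by (try lia; intros; apply Hz; lia).
      rewrite (Hz (S b)) by lia. ring.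
Qed.

Lemma sumR_tele g a b : (a <= S b)%nat ->
  sumR (fun j => g (S j) - g j) a b = g (S b) - g a.
Proof.
  intros H. induction b.
  - destruct a. rewrite sumR_nn; auto. rewrite sumR_lt by lia. replace a with 0%nat by lia; ring.
  - destruct (Nat.eq_dec a (S (S b))). subst. rewrite sumR_lt by lia; ring.
    rewrite sumR_Sm by lia. rewrite IHb by lia. ring.
Qed.

Fixpoint Pd (N : nat) (f : R -> R) : Prop :=
  match N with
  | O => exists c, forall t, f t = c
  | S N' => exists c g, Pd N' g /\ forall t, f t = c + t * g t
  end.

Lemma Pd_ext N f g : (forall x, f x = g x) -> Pd N f -> Pd N g.
Proof.
  destruct N; simpl; intros He [c H].
  - exists c; intros; rewrite <- He; auto.
  - destruct H as [g' [Hg H]]. exists c, g'; split; auto. intros; rewrite <- He; auto.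
Qed.

Lemma Pd_const N c : Pd N (fun _ => c).
Proof.
  induction N; simpl. exists c; auto.
  exists c, (fun _ => 0); split. apply (Pd_ext N (fun _ => 0)); auto; clear IHN.
  induction N; simpl. exists 0; auto. exists 0, (fun _ => 0); split; auto. intros; ring.
  intros; ring.
Qed.

Lemma Pd_S N f : Pd N f -> Pd (S N) f.
Proof.
  revert f; induction N; intros f H.
  - destruct H as [c H]. exists c, (fun _ => 0). split. exists 0; auto. intros; rewrite H; ring.
  - destruct H as [c [g [Hg H]]]. exists c, g; split; auto.
Qed.

Lemma Pd_le N M f : (N <= M)%nat -> Pd N f -> Pd M f.
Proof. induction 1; auto. intros; apply Pd_S; auto. Qed.

Lemma Pd_add N f g : Pd N f -> Pd N g -> Pd N (fun x => f x + g x).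
Proof.
  revert f g; induction N; intros f g Hf Hg.
  - destruct Hf as [c Hf], Hg as [d Hg]. exists (c + d); intros; rewrite Hf, Hg; auto.
  - destruct Hf as [c [f' [Hf' Hf]]], Hg as [d [g' [Hg' Hg]]].
    exists (c + d), (fun x => f' x + g' x); split; auto. intros; rewrite Hf, Hg; ring.
Qed.

Lemma Pd_scal N a f : Pd N f -> Pd N (fun x => a * f x).
Proof.
  revert f; induction N; intros f Hf.
  - destruct Hf as [c Hf]. exists (a * c); intros; rewrite Hf; auto.
  - destruct Hf as [c [f' [Hf' Hf]]].
    exists (a * c), (fun x => a * f' x); split; auto. intros; rewrite Hf; ring.
Qed.

Lemma Pd_mult_t N f : Pd N f -> Pd (S N) (fun x => x * f x).
Proof. intros H. exists 0, f; split; auto. intros; ring. Qed.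

Lemma Pd_mul a b f g : Pd a f -> Pd b g -> Pd (a + b) (fun x => f x * g x).
Proof.
  revert f; induction a; intros f Hf Hg.
  - destruct Hf as [c Hf]. simpl. eapply Pd_ext; [|apply (Pd_scal _ c _ Hg)]. intros; rewrite Hf; auto.
  - destruct Hf as [c [f' [Hf' Hf]]].
    eapply Pd_ext; [|apply (Pd_add (S a + b) (fun x => c * g x) (fun x => x * (f' x * g x)))].
    intros; simpl; rewrite Hf; ring.
    apply Pd_scal. apply (Pd_le b); auto; lia.
    simpl. apply Pd_mult_t. auto.
Qed.

Lemma Pd_sub N f g : Pd N f -> Pd N g -> Pd N (fun x => f x - g x).
Proof.
  intros Hf Hg. eapply Pd_ext; [|apply (Pd_add _ _ _ Hf (Pd_scal _ (-1) _ Hg))]. intros; simpl; ring.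
Qed.

Lemma Pd_continuous N f : Pd N f -> forall x, continuous f x.
Proof.
  revert f; induction N; intros f Hf x.
  - destruct Hf as [c Hf]. eapply continuous_ext. intros; symmetry; apply Hf. apply continuous_const.
  - destruct Hf as [c [g [Hg Hf]]]. eapply continuous_ext. intros; symmetry; apply Hf.
    apply (continuous_plus (fun _ => c) (fun t => t * g t)). apply continuous_const.
    apply (continuous_mult (fun t => t) g). apply continuous_id. apply IHN; auto.
Qed.

Lemma Pd_factor N f r : Pd (S N) f -> exists g, Pd N g /\ forall t, f t = f r + (t - r) * g t.
Proof.
  revert f; induction N; intros f Hf.
  - destruct Hf as [c [g [[d Hg] Hf]]]. exists (fun _ => d). split. exists d; auto.
    intros; rewrite !Hf, !Hg; ring.
  - destruct Hf as [c [g [Hg Hf]]]. destruct (IHN g Hg) as [h [Hh Hgh]].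
    exists (fun t => g r + t * h t). split. exists (g r), h; split; auto.
    intros; rewrite !Hf. rewrite (Hgh t). ring.
Qed.

Lemma Pd_roots N f (l : list R) : Pd N f -> NoDup l -> length l = S N ->
  (forall r, In r l -> f r = 0) -> forall t, f t = 0.
Proof.
  revert f l; induction N; intros f l Hf Hnd Hlen Hr t.
  - destruct Hf as [c Hf]. destruct l as [|r l]; [discriminate|].
    rewrite Hf. rewrite <- (Hf r). apply Hr; simpl; auto.
  - destruct l as [|r l]; [discriminate|].
    destruct (Pd_factor N f r Hf) as [g [Hg Hfg]].
    inversion Hnd; subst.
    assert (Hg0 : forall t, g t = 0).
    { apply (IHN g l Hg); auto. intros r' Hr'.
      assert (r' <> r) by (intro; subst; auto).
      assert (f r' = 0) by (apply Hr; simpl; auto).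
      rewrite Hfg in H0. rewrite (Hr r) in H0 by (simpl; auto).
      assert (r' - r <> 0) by lra.
      apply (Rmult_eq_reg_l (r' - r)); auto. lra. }
    rewrite Hfg, Hg0, (Hr r) by (simpl; auto). ring.
Qed.

Definition prodR_fold := prodR.

Lemma Pd_prodR (l : list nat) (F : nat -> R -> R) :
  (forall k, In k l -> Pd 1 (F k)) -> Pd (length l) (fun t => prodR l (fun k => F k t)).
Proof.
  induction l as [|k l IH]; intros H.
  - simpl. exists 1; auto.
  - simpl. replace (S (length l)) with (1 + length l)%nat by lia.
    apply (Pd_mul 1 (length l) (F k) (fun t => prodR l (fun k0 => F k0 t))).
    apply H; simpl; auto. apply IH; intros; apply H; simpl; auto.
Qed.

Lemma prodR_zero (l : list nat) f k : In k l -> f k = 0 -> prodR l f = 0.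
Proof.
  induction l; simpl; [tauto|]. intros [->|Hin] Hf. rewrite Hf; ring. rewrite IHl; auto; ring.
Qed.

Lemma prodR_one (l : list nat) f : (forall k, In k l -> f k = 1) -> prodR l f = 1.
Proof.
  induction l; simpl; intros H; auto. rewrite H, IHl; auto; ring.
Qed.

Lemma length_filter_neq (l : list nat) i : NoDup l -> In i l ->
  length (filter (fun k => negb (Nat.eqb k i)) l) = (length l - 1)%nat.
Proof.
  assert (Hno : forall l, ~ In i l -> filter (fun k => negb (Nat.eqb k i)) l = l).
  { induction l0; simpl; intros; auto. destruct (Nat.eqb_spec a i). exfalso; auto.
    simpl; rewrite IHl0; auto. }
  induction l as [|x l IH]; simpl; intros Hnd Hin; [contradiction|].
  inversion Hnd; subst. destruct (Nat.eqb_spec x i).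
  - subst; simpl. rewrite Hno; auto. lia.
  - destruct Hin as [->|Hin]; [congruence|]. simpl. rewrite IH; auto.
    destruct l; simpl in *; [contradiction|]. lia.
Qed.

Definition allcont (f : R -> R) := forall x, continuous f x.

Lemma allcont_sum F a b : (forall k, allcont (F k)) -> allcont (fun x => sumR (fun k => F k x) a b).
Proof.
  intros H. apply (sumR_closed allcont F a b); auto.
  - intro; apply continuous_const.
  - intros f g Hf Hg x; apply (continuous_plus f g); auto.
  - intros f g He Hf x. eapply continuous_ext; [|apply Hf]. auto.
Qed.

Lemma RInt_sumR F a b lo hi : (forall k, allcont (F k)) ->
  RInt (fun t => sumR (fun k => F k t) a b) lo hi = sumR (fun k => RInt (F k) lo hi) a b.
Proof.
  intros H. induction b.
  - destruct a.
    + rewrite sumR_nn. apply RInt_ext; intros; rewrite sumR_nn; auto.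
    + rewrite sumR_lt by lia. rewrite (RInt_ext _ (fun _ => 0)). rewrite RInt_const.
      unfold scal; simpl; unfold mult; simpl; ring. intros; rewrite sumR_lt; auto; lia.
  - destruct (le_lt_dec a (S b)).
    + destruct (Nat.eq_dec a (S b)).
      * subst. rewrite sumR_nn. apply RInt_ext; intros; rewrite sumR_nn; auto.
      * rewrite sumR_Sm by lia. rewrite <- IHb.
        rewrite (RInt_ext _ (fun t => plus (sumR (fun k => F k t) a b) (F (S b) t))).
        rewrite (RInt_plus (V:=R_CompleteNormedModule) (fun t => sumR (fun k => F k t) a b) (F (S b))). reflexivity.
        apply ex_RInt_continuous; intros; apply allcont_sum; auto.
        apply ex_RInt_continuous; intros; apply H.
        intros; rewrite sumR_Sm by lia; reflexivity.
    + rewrite sumR_lt by lia. rewrite (RInt_ext _ (fun _ => 0)). rewrite RInt_const.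
      unfold scal; simpl; unfold mult; simpl; ring. intros; rewrite sumR_lt; auto; lia.
Qed.

Section Lag.
Variable m : nat.
Variable c : nat -> R.
Hypothesis Hm : (1 <= m)%nat.
Hypothesis Hc : forall i k, (1 <= i <= 2 * m)%nat -> (1 <= k <= 2 * m)%nat -> i <> k -> c i <> c k.

Definition Lb (i : nat) (t : R) : R :=
  prodR (filter (fun k => negb (Nat.eqb k i)) (seq 1 (2 * m)))
        (fun k => (t - c k) / (c i - c k)).

Lemma Lb_Pd i : (1 <= i <= 2 * m)%nat -> Pd (2 * m - 1) (Lb i).
Proof.
  intros Hi. unfold Lb.
  replace (2 * m - 1)%nat with (length (filter (fun k => negb (Nat.eqb k i)) (seq 1 (2 * m)))).
  apply (Pd_prodR _ (fun k t => (t - c k) / (c i - c k))).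
  intros k _. exists (- c k / (c i - c k)), (fun _ => / (c i - c k)). split.
  exists (/ (c i - c k)); auto. intros; unfold Rdiv; ring.
  rewrite length_filter_neq. rewrite length_seq; auto. apply seq_NoDup. apply in_seq; lia.
Qed.

Lemma Lb_node i l : (1 <= i <= 2 * m)%nat -> (1 <= l <= 2 * m)%nat ->
  Lb i (c l) = if Nat.eqb i l then 1 else 0.
Proof.
  intros Hi Hl. unfold Lb. destruct (Nat.eqb_spec i l).
  - subst. apply prodR_one. intros k Hk. apply filter_In in Hk as [Hk Hn].
    apply in_seq in Hk. destruct (Nat.eqb_spec k l); [discriminate|].
    field. intro; apply (Hc l k); try lia; lra.
  - apply (prodR_zero _ _ l). apply filter_In; split. apply in_seq; lia.
    destruct (Nat.eqb_spec l i); auto.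
    unfold Rdiv; ring.
Qed.

Lemma Lb_cont i : allcont (Lb i).
Proof. intro; eapply Pd_continuous. unfold Lb.
  apply (Pd_prodR _ (fun k t => (t - c k) / (c i - c k))).
  intros k _. exists (- c k / (c i - c k)), (fun _ => / (c i - c k)). split.
  exists (/ (c i - c k)); auto. intros; unfold Rdiv; ring. Qed.

Lemma interp P : Pd (2 * m - 1) P ->
  forall t, P t = sumR (fun i => P (c i) * Lb i t) 1 (2 * m).
Proof.
  intros HP.
  assert (HQ : Pd (2 * m - 1) (fun t => P t - sumR (fun i => P (c i) * Lb i t) 1 (2 * m))).
  { apply Pd_sub; auto.
    eapply Pd_ext; [|apply (sumR_closed (Pd (2*m-1)) (fun i t => if (andb (1 <=? i) (i <=? 2*m))%nat then P (c i) * Lb i t else 0) 1 (2*m))].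
    2: apply Pd_const.
    2: apply Pd_add.
    2: intros f g He Hf; eapply Pd_ext; eauto.
    2: { intros k. destruct (1 <=? k)%nat eqn:E1; destruct (k <=? 2*m)%nat eqn:E2; simpl; try apply Pd_const.
      apply Pd_scal, Lb_Pd. apply Nat.leb_le in E1, E2; lia. }
    intros x; apply sumR_ext. intros k Hk.
    replace ((1 <=? k) && (k <=? 2 * m))%bool with true; auto.
    symmetry; apply Bool.andb_true_iff; split; apply Nat.leb_le; lia. }
  intros t.
  assert (forall t, P t - sumR (fun i => P (c i) * Lb i t) 1 (2 * m) = 0).
  { apply (Pd_roots _ _ (map c (seq 1 (2 * m))) HQ).
    - apply NoDup_map_NoDup_ForallPairs. intros x y Hx Hy Hxy.
      apply in_seq in Hx, Hy. destruct (Nat.eq_dec x y); auto. exfalso; apply (Hc x y); auto; lia.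
      apply seq_NoDup.
    - rewrite length_map, length_seq. lia.
    - intros r Hr. apply in_map_iff in Hr as [l [<- Hl]]. apply in_seq in Hl.
      rewrite (sumR_single _ 1 (2*m) l) by (first [lia | intros k Hk Hkl;
        rewrite Lb_node by lia; destruct (Nat.eqb_spec k l); [congruence|ring]]).
      rewrite Lb_node by lia. rewrite Nat.eqb_refl. ring. }
  specialize (H t). lra.
Qed.

Lemma quad P : Pd (2 * m - 1) P ->
  RInt P (-1) 1 = sumR (fun i => RInt (Lb i) (-1) 1 * P (c i)) 1 (2 * m).
Proof.
  intros HP. rewrite (RInt_ext _ (fun t => sumR (fun i => P (c i) * Lb i t) 1 (2 * m))).
  rewrite RInt_sumR. apply sumR_ext; intros k _.
  rewrite (RInt_ext _ (fun t => scal (P (c k)) (Lb k t))) by reflexivity.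
  rewrite (RInt_scal (V:=R_CompleteNormedModule)). unfold scal; simpl; unfold mult; simpl; ring.
  apply ex_RInt_continuous; intros; apply Lb_cont.
  intros k x. apply (continuous_mult (fun _ => P (c k)) (Lb k)). apply continuous_const. apply Lb_cont.
  intros; apply interp; auto.
Qed.
End Lag.

Fixpoint TP (N : nat) (F : R -> R) : Prop :=
  match N with
  | O => exists c, forall x, F x = c
  | S N' => exists G A B, TP N' G /\ forall x,
      F x = G x + A * cos (INR (S N') * x) + B * sin (INR (S N') * x)
  end.

Lemma TP_ext N f g : (forall x, f x = g x) -> TP N f -> TP N g.
Proof.
  destruct N; simpl; intros He H.
  - destruct H as [c H]; exists c; intros; rewrite <- He; auto.
  - destruct H as [G [A [B [HG H]]]]. exists G, A, B; split; auto. intros; rewrite <- He; auto.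
Qed.

Lemma TP_const N c : TP N (fun _ => c).
Proof.
  induction N; simpl. exists c; auto.
  exists (fun _ => c), 0, 0; split; auto. intros; ring.
Qed.

Lemma TP_S N f : TP N f -> TP (S N) f.
Proof. intros H. exists f, 0, 0; split; auto. intros; ring. Qed.

Lemma TP_le N M f : (N <= M)%nat -> TP N f -> TP M f.
Proof. induction 1; auto. intros; apply TP_S; auto. Qed.

Lemma TP_add N f g : TP N f -> TP N g -> TP N (fun x => f x + g x).
Proof.
  revert f g; induction N; intros f g Hf Hg.
  - destruct Hf as [c Hf], Hg as [d Hg]. exists (c + d); intros; rewrite Hf, Hg; auto.
  - destruct Hf as [F [A [B [HF Hf]]]], Hg as [G [C [D [HG Hg]]]].
    exists (fun x => F x + G x), (A + C), (B + D); split; auto. intros; rewrite Hf, Hg; ring.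
Qed.

Lemma TP_scal N a f : TP N f -> TP N (fun x => a * f x).
Proof.
  revert f; induction N; intros f Hf.
  - destruct Hf as [c Hf]. exists (a * c); intros; rewrite Hf; auto.
  - destruct Hf as [F [A [B [HF Hf]]]].
    exists (fun x => a * F x), (a * A), (a * B); split; auto. intros; rewrite Hf; ring.
Qed.

Lemma TP_cosk k N : (k <= N)%nat -> TP N (fun x => cos (INR k * x)).
Proof.
  intros H. apply (TP_le k); auto. destruct k.
  - exists 1; intros; simpl; rewrite Rmult_0_l; apply cos_0.
  - exists (fun _ => 0), 1, 0; split. apply TP_const. intros; ring.
Qed.

Lemma TP_sink k N : (k <= N)%nat -> TP N (fun x => sin (INR k * x)).
Proof.
  intros H. apply (TP_le k); auto. destruct k.
  - exists 0; intros; simpl; rewrite Rmult_0_l; apply sin_0.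
  - exists (fun _ => 0), 0, 1; split. apply TP_const. intros; ring.
Qed.

Lemma TP_mulcos N f : TP N f -> TP (S N) (fun x => cos x * f x).
Proof.
  revert f; induction N; intros f Hf.
  - destruct Hf as [c Hf]. exists (fun _ => 0), c, 0; split. apply TP_const.
    intros; rewrite Hf; simpl; rewrite Rmult_1_l; ring.
  - destruct Hf as [G [A [B [HG Hf]]]].
    apply (TP_ext _ (fun x => cos x * G x + (A/2 * (cos (INR (S (S N)) * x) + cos (INR N * x)) + B/2 * (sin (INR (S (S N)) * x) + sin (INR N * x))))).
    2:{ apply TP_add. apply TP_S, IHN, HG. apply TP_add; apply TP_scal, TP_add;
        first [apply TP_cosk | apply TP_sink]; lia. }
    intros x; cbv beta. rewrite Hf.
    replace (INR (S (S N)) * x) with (INR (S N) * x + x) by (rewrite !S_INR; ring).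
    replace (INR N * x) with (INR (S N) * x - x) by (rewrite !S_INR; ring).
    rewrite cos_plus, cos_minus, sin_plus, sin_minus. field.
Qed.

Lemma TP_mulsin N f : TP N f -> TP (S N) (fun x => sin x * f x).
Proof.
  revert f; induction N; intros f Hf.
  - destruct Hf as [c Hf]. exists (fun _ => 0), 0, c; split. apply TP_const.
    intros; rewrite Hf; simpl; rewrite Rmult_1_l; ring.
  - destruct Hf as [G [A [B [HG Hf]]]].
    apply (TP_ext _ (fun x => sin x * G x + (A/2 * (sin (INR (S (S N)) * x) + -1 * sin (INR N * x)) + B/2 * (cos (INR N * x) + -1 * cos (INR (S (S N)) * x))))).
    2:{ apply TP_add. apply TP_S, IHN, HG. apply TP_add; apply TP_scal, TP_add; try apply TP_scal;
        first [apply TP_cosk | apply TP_sink]; lia. }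
    intros x; cbv beta. rewrite Hf.
    replace (INR (S (S N)) * x) with (INR (S N) * x + x) by (rewrite !S_INR; ring).
    replace (INR N * x) with (INR (S N) * x - x) by (rewrite !S_INR; ring).
    rewrite cos_plus, cos_minus, sin_plus, sin_minus. field.
Qed.

Lemma TP_pow a b : TP (a + b) (fun x => cos x ^ a * sin x ^ b).
Proof.
  induction a.
  - simpl. induction b.
    + exists 1; intros; simpl; ring.
    + eapply TP_ext; [|apply (TP_mulsin _ _ IHb)]. intros; simpl; ring.
  - eapply TP_ext; [|apply (TP_mulcos _ _ IHa)]. intros; simpl; ring.
Qed.

Lemma cont_cosk k x : continuous (fun x => cos (INR k * x)) x.
Proof. apply continuity_pt_filterlim. apply derivable_continuous_pt. reg. Qed.
Lemma cont_sink k x : continuous (fun x => sin (INR k * x)) x.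
Proof. apply continuity_pt_filterlim. apply derivable_continuous_pt. reg. Qed.

Lemma TP_cont N f : TP N f -> allcont f.
Proof.
  revert f; induction N; intros f Hf x.
  - destruct Hf as [c Hf]. eapply continuous_ext. intros; symmetry; apply Hf. apply continuous_const.
  - destruct Hf as [G [A [B [HG Hf]]]]. eapply continuous_ext. intros; symmetry; apply Hf.
    apply (continuous_plus (fun x => G x + A * cos (INR (S N) * x)) (fun x => B * sin (INR (S N) * x))).
    apply (continuous_plus G (fun x => A * cos (INR (S N) * x))). apply IHN; auto.
    apply (continuous_mult (fun _ => A) (fun x => cos (INR (S N) * x))). apply continuous_const. apply cont_cosk.
    apply (continuous_mult (fun _ => B) (fun x => sin (INR (S N) * x))). apply continuous_const. apply cont_sink.
Qed.

Lemma RInt_cosk k : (1 <= k)%nat -> RInt (fun x => cos (INR k * x)) 0 (2 * PI) = 0.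
Proof.
  intros Hk. assert (INR k <> 0) by (apply not_0_INR; lia).
  assert (Hi : is_RInt (fun x => cos (INR k * x)) 0 (2 * PI) (minus ((fun x => sin (INR k * x) / INR k) (2 * PI)) ((fun x => sin (INR k * x) / INR k) 0))).
  { apply (is_RInt_derive (fun x => sin (INR k * x) / INR k) (fun x => cos (INR k * x))). intros; auto_derive; auto. field; auto.
    intros; apply cont_cosk. }
  rewrite (is_RInt_unique _ _ _ _ Hi).
  unfold minus, plus, opp; simpl. rewrite Rmult_0_r, sin_0.
  replace (INR k * (2 * PI)) with (0 + 2 * INR k * PI) by ring. rewrite sin_period, sin_0. field; auto.
Qed.

Lemma RInt_sink k : (1 <= k)%nat -> RInt (fun x => sin (INR k * x)) 0 (2 * PI) = 0.
Proof.
  intros Hk. assert (INR k <> 0) by (apply not_0_INR; lia).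
  assert (Hi : is_RInt (fun x => sin (INR k * x)) 0 (2 * PI) (minus ((fun x => - cos (INR k * x) / INR k) (2 * PI)) ((fun x => - cos (INR k * x) / INR k) 0))).
  { apply (is_RInt_derive (fun x => - cos (INR k * x) / INR k) (fun x => sin (INR k * x))). intros; auto_derive; auto. field; auto.
    intros; apply cont_sink. }
  rewrite (is_RInt_unique _ _ _ _ Hi).
  unfold minus, plus, opp; simpl. rewrite Rmult_0_r, cos_0.
  replace (INR k * (2 * PI)) with (0 + 2 * INR k * PI) by ring. rewrite cos_period, cos_0. field; auto.
Qed.

Section Disc.
Variable m : nat.
Hypothesis Hm : (1 <= m)%nat.

Lemma INRm_pos : 0 < INR m.
Proof. apply lt_0_INR; lia. Qed.

Lemma disc_gen k (g : nat -> R) (u : nat -> R) :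
  (1 <= k <= 2 * m - 1)%nat ->
  (forall j, 2 * sin (INR k * PI / (2 * INR m)) * u j = g (S j) - g j) ->
  g (2 * m)%nat = g 0%nat ->
  sumR u 0 (2 * m - 1) = 0.
Proof.
  intros Hk Hg Hper. pose proof INRm_pos as Hmp.
  assert (Hs : 0 < sin (INR k * PI / (2 * INR m))).
  { apply sin_gt_0. apply Rdiv_lt_0_compat. apply Rmult_lt_0_compat. apply lt_0_INR; lia. apply PI_RGT_0. lra.
    apply (Rmult_lt_reg_r (2 * INR m)). lra. unfold Rdiv. rewrite Rmult_assoc, Rinv_l by lra.
    assert (INR k < 2 * INR m). { replace 2 with (INR 2) by reflexivity. rewrite <- mult_INR. apply lt_INR; lia. }
    pose proof PI_RGT_0. nra. }
  apply (Rmult_eq_reg_l (2 * sin (INR k * PI / (2 * INR m)))); [|lra].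
  rewrite <- sumR_scal. rewrite (sumR_ext _ (fun j => g (S j) - g j)) by (intros; apply Hg).
  rewrite sumR_tele by lia. replace (S (2 * m - 1)) with (2 * m)%nat by lia. rewrite Hper. ring.
Qed.

Lemma disc_cos k s : (1 <= k <= 2 * m - 1)%nat ->
  sumR (fun j => cos (INR k * (s + phi m 0 j))) 0 (2 * m - 1) = 0.
Proof.
  intros Hk. pose proof INRm_pos as Hmp. set (h := INR k * PI / (2 * INR m)).
  apply (disc_gen k (fun j => sin (INR k * s + (2 * INR j - 1) * h))); auto.
  - intros j. replace (INR k * s + (2 * INR (S j) - 1) * h) with (INR k * (s + phi m 0 j) + h).
    replace (INR k * s + (2 * INR j - 1) * h) with (INR k * (s + phi m 0 j) - h).
    rewrite sin_plus, sin_minus. fold h. ring.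
    unfold h, phi; change (INR 0) with 0; field; lra.
    unfold h, phi; rewrite S_INR; change (INR 0) with 0; field; lra.
  - cbv beta. replace (INR k * s + (2 * INR (2 * m) - 1) * h) with ((INR k * s + (2 * INR 0 - 1) * h) + 2 * INR k * PI).
    apply sin_period. unfold h; rewrite mult_INR; change (INR 0) with 0; change (INR 2) with 2; field; lra.
Qed.

Lemma disc_sin k s : (1 <= k <= 2 * m - 1)%nat ->
  sumR (fun j => sin (INR k * (s + phi m 0 j))) 0 (2 * m - 1) = 0.
Proof.
  intros Hk. pose proof INRm_pos as Hmp. set (h := INR k * PI / (2 * INR m)).
  apply (disc_gen k (fun j => - cos (INR k * s + (2 * INR j - 1) * h))); auto.
  - intros j. replace (INR k * s + (2 * INR (S j) - 1) * h) with (INR k * (s + phi m 0 j) + h).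
    replace (INR k * s + (2 * INR j - 1) * h) with (INR k * (s + phi m 0 j) - h).
    rewrite cos_plus, cos_minus. fold h. ring.
    unfold h, phi; change (INR 0) with 0; field; lra.
    unfold h, phi; rewrite S_INR; change (INR 0) with 0; field; lra.
  - cbv beta. replace (INR k * s + (2 * INR (2 * m) - 1) * h) with ((INR k * s + (2 * INR 0 - 1) * h) + 2 * INR k * PI).
    rewrite cos_period; auto. unfold h; rewrite mult_INR; change (INR 0) with 0; change (INR 2) with 2; field; lra.
Qed.

Lemma TP_disc N F s : (N <= 2 * m - 1)%nat -> TP N F ->
  PI / INR m * sumR (fun j => F (s + phi m 0 j)) 0 (2 * m - 1) = RInt F 0 (2 * PI).
Proof.
  pose proof INRm_pos as Hmp.
  revert F; induction N; intros F HN HF.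
  - destruct HF as [c HF]. rewrite (sumR_ext _ (fun _ => c)) by auto.
    rewrite (RInt_ext _ (fun _ => c)) by auto. rewrite RInt_const, sumR_const.
    replace (S (2 * m - 1) - 0)%nat with (2 * m)%nat by lia. rewrite mult_INR.
    change (scal (2 * PI - 0) c) with ((2 * PI - 0) * c). change (INR 2) with 2. field; lra.
  - destruct HF as [G [A [B [HG HF]]]].
    rewrite (sumR_ext _ (fun j => (G (s + phi m 0 j) + A * cos (INR (S N) * (s + phi m 0 j))) + B * sin (INR (S N) * (s + phi m 0 j)))) by auto.
    rewrite !sumR_plus, !sumR_scal, disc_cos, disc_sin by lia.
    rewrite (RInt_ext _ (fun x => plus (plus (G x) (scal A (cos (INR (S N) * x)))) (scal B (sin (INR (S N) * x))))) by (intros; apply HF).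
    assert (HGc := TP_cont _ _ HG).
    assert (Hc1 : allcont (fun x => scal A (cos (INR (S N) * x)))).
    { intro x; apply (continuous_mult (fun _ => A) (fun x => cos (INR (S N) * x))). apply continuous_const. apply cont_cosk. }
    assert (Hc2 : allcont (fun x => scal B (sin (INR (S N) * x)))).
    { intro x; apply (continuous_mult (fun _ => B) (fun x => sin (INR (S N) * x))). apply continuous_const. apply cont_sink. }
    assert (Hc3 : allcont (fun x => plus (G x) (scal A (cos (INR (S N) * x))))).
    { intro x; apply (continuous_plus G (fun x => scal A (cos (INR (S N) * x)))). apply HGc. apply Hc1. }
    rewrite (RInt_plus (V:=R_CompleteNormedModule)) by (apply ex_RInt_continuous; intros; first [apply Hc3 | apply Hc2]).
    rewrite (RInt_plus (V:=R_CompleteNormedModule)) by (apply ex_RInt_continuous; intros; first [apply HGc | apply Hc1]).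
    rewrite !(RInt_scal (V:=R_CompleteNormedModule)) by (apply ex_RInt_continuous; intros; first [apply cont_cosk | apply cont_sink]).
    rewrite RInt_cosk, RInt_sink by lia.
    rewrite <- (IHN G) by (try assumption; lia).
    change (plus (plus (PI / INR m * sumR (fun j => G (s + phi m 0 j)) 0 (2 * m - 1)) (scal A 0)) (scal B 0))
      with ((PI / INR m * sumR (fun j => G (s + phi m 0 j)) 0 (2 * m - 1)) + A * 0 + B * 0).
    ring.
Qed.
End Disc.

Definition SF (N : nat) (h : R -> R) : Prop :=
  exists P Q, Pd N P /\ Pd (N - 1) Q /\ (N = 0%nat -> forall t, Q t = 0) /\
    forall x, h x = P (cos x) + sin x * Q (cos x).

Lemma SF_ext N f g : (forall x, f x = g x) -> SF N f -> SF N g.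
Proof. intros He [P [Q [H1 [H2 [H3 H4]]]]]. exists P, Q; repeat split; auto. intros; rewrite <- He; auto. Qed.

Lemma SF_const N c : SF N (fun _ => c).
Proof. exists (fun _ => c), (fun _ => 0); repeat split; auto using Pd_const. intros; ring. Qed.

Lemma SF_add N f g : SF N f -> SF N g -> SF N (fun x => f x + g x).
Proof.
  intros [P [Q [H1 [H2 [H3 H4]]]]] [P' [Q' [H1' [H2' [H3' H4']]]]].
  exists (fun t => P t + P' t), (fun t => Q t + Q' t); repeat split; auto using Pd_add.
  intros -> t; rewrite H3, H3'; auto; ring. intros; rewrite H4, H4'; ring.
Qed.

Lemma SF_scal N a f : SF N f -> SF N (fun x => a * f x).
Proof.
  intros [P [Q [H1 [H2 [H3 H4]]]]].
  exists (fun t => a * P t), (fun t => a * Q t); repeat split; auto using Pd_scal.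
  intros -> t; rewrite H3; auto; ring. intros; rewrite H4; ring.
Qed.

Lemma SF_S N f : SF N f -> SF (S N) f.
Proof.
  intros [P [Q [H1 [H2 [H3 H4]]]]]. exists P, Q; repeat split; auto using Pd_S.
  destruct N. simpl in *. auto. replace (S (S N) - 1)%nat with (S (S N - 1)) by lia. apply Pd_S; auto.
  discriminate.
Qed.

Lemma SF_le N M f : (N <= M)%nat -> SF N f -> SF M f.
Proof. induction 1; auto. intros; apply SF_S; auto. Qed.

Lemma SF_mulcos N f : SF N f -> SF (S N) (fun x => cos x * f x).
Proof.
  intros [P [Q [H1 [H2 [H3 H4]]]]].
  exists (fun t => t * P t), (fun t => t * Q t); repeat split; auto using Pd_mult_t.
  destruct N. simpl. apply (Pd_ext 0 (fun _ => 0)). intros; cbv beta; rewrite H3; auto; ring. apply Pd_const.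
  replace (S (S N) - 1)%nat with (S (S N - 1)) by lia. apply Pd_mult_t; auto.
  discriminate. intros; rewrite H4; ring.
Qed.

Lemma SF_mulsin N f : SF N f -> SF (S N) (fun x => sin x * f x).
Proof.
  intros [P [Q [H1 [H2 [H3 H4]]]]].
  exists (fun t => (1 - t * t) * Q t), P; repeat split.
  - destruct N.
    + apply (Pd_ext 1 (fun _ => 0)). intros; cbv beta; rewrite H3; auto; ring. apply Pd_const.
    + replace (S (S N)) with (2 + (S N - 1))%nat by lia.
      apply (Pd_mul 2 (S N - 1) (fun t => 1 - t * t) Q); auto.
      exists 1, (fun t => - t); split. exists 0, (fun _ => -1); split. exists (-1); auto. intros; ring. intros; ring.
  - replace (S N - 1)%nat with N by lia; auto.
  - discriminate.
  - intros; rewrite H4. pose proof (sin2_cos2 x). unfold Rsqr in H. 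
    assert (E: sin x * sin x = 1 - cos x * cos x) by lra.
    cbv beta. transitivity (sin x * P (cos x) + (sin x * sin x) * Q (cos x)); [ring|rewrite E; ring].
Qed.

Lemma SF_pow k d : SF (k + d) (fun x => sin x ^ k * cos x ^ d).
Proof.
  induction k.
  - simpl. induction d.
    + eapply SF_ext; [|apply (SF_const 0 1)]. intros; simpl; ring.
    + eapply SF_ext; [|apply (SF_mulcos _ _ IHd)]. intros; simpl; ring.
  - eapply SF_ext; [|apply (SF_mulsin _ _ IHk)]. intros; simpl; ring.
Qed.


Lemma Tt_poly n T c : (forall x y z, x ^ 2 + y ^ 2 + z ^ 2 = 1 -> T x y z = poly3 n c x y z) ->
  forall th ph, Ttilde T th ph = poly3 n c (sin th * cos ph) (sin th * sin ph) (cos th).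
Proof.
  intros H th ph. unfold Ttilde. apply H.
  pose proof (sin2_cos2 th); pose proof (sin2_cos2 ph). unfold Rsqr in *.
  transitivity (sin th * sin th * (sin ph * sin ph + cos ph * cos ph) + cos th * cos th); [ring|].
  rewrite H1. lra.
Qed.

Lemma poly3_TP n c th : TP n (fun ph => poly3 n c (sin th * cos ph) (sin th * sin ph) (cos th)).
Proof.
  unfold poly3.
  apply (sumR_closed (TP n) (fun a ph => sumR (fun b => sumR (fun d =>
    if (a + b + d <=? n)%nat then c a b d * (sin th * cos ph) ^ a * (sin th * sin ph) ^ b * cos th ^ d else 0)
    0 n) 0 n)); [apply TP_const | apply TP_add | intros; eapply TP_ext; eauto | intros a].
  apply (sumR_closed (TP n) (fun b ph => sumR (fun d =>
    if (a + b + d <=? n)%nat then c a b d * (sin th * cos ph) ^ a * (sin th * sin ph) ^ b * cos th ^ d else 0)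
    0 n)); [apply TP_const | apply TP_add | intros; eapply TP_ext; eauto | intros b].
  apply (sumR_closed (TP n) (fun d ph =>
    if (a + b + d <=? n)%nat then c a b d * (sin th * cos ph) ^ a * (sin th * sin ph) ^ b * cos th ^ d else 0)
    ); [apply TP_const | apply TP_add | intros; eapply TP_ext; eauto | intros d].
  destruct (Nat.leb_spec (a + b + d) n); [|apply TP_const].
  apply (TP_ext _ (fun ph => (c a b d * sin th ^ a * sin th ^ b * cos th ^ d) * (cos ph ^ a * sin ph ^ b))).
  intros; rewrite !Rpow_mult_distr; ring.
  apply TP_scal. apply (TP_le (a + b)); [lia|apply TP_pow].
Qed.

Lemma poly3_SF n c ph : SF n (fun th => poly3 n c (sin th * cos ph) (sin th * sin ph) (cos th)).
Proof.
  unfold poly3.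
  apply (sumR_closed (SF n) (fun a th => sumR (fun b => sumR (fun d =>
    if (a + b + d <=? n)%nat then c a b d * (sin th * cos ph) ^ a * (sin th * sin ph) ^ b * cos th ^ d else 0)
    0 n) 0 n)); [apply SF_const | apply SF_add | intros; eapply SF_ext; eauto | intros a].
  apply (sumR_closed (SF n) (fun b th => sumR (fun d =>
    if (a + b + d <=? n)%nat then c a b d * (sin th * cos ph) ^ a * (sin th * sin ph) ^ b * cos th ^ d else 0)
    0 n)); [apply SF_const | apply SF_add | intros; eapply SF_ext; eauto | intros b].
  apply (sumR_closed (SF n) (fun d th =>
    if (a + b + d <=? n)%nat then c a b d * (sin th * cos ph) ^ a * (sin th * sin ph) ^ b * cos th ^ d else 0)
    ); [apply SF_const | apply SF_add | intros; eapply SF_ext; eauto | intros d].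
  destruct (Nat.leb_spec (a + b + d) n); [|apply SF_const].
  apply (SF_ext _ (fun th => (c a b d * cos ph ^ a * sin ph ^ b) * (sin th ^ (a + b) * cos th ^ d))).
  intros; rewrite !Rpow_mult_distr, pow_add; ring.
  apply SF_scal. apply (SF_le (a + b + d)); [lia|apply SF_pow].
Qed.

Theorem proposition3p2 (m : nat) (theta : nat -> R) (T : R -> R -> R -> R) :
  (1 <= m)%nat ->
  (forall i, (1 <= i <= 2 * m)%nat -> 0 < theta i < PI) ->
  (forall i j, (1 <= i <= 2 * m)%nat -> (1 <= j <= 2 * m)%nat -> i <> j ->
     theta i <> theta j) ->
  (forall i, (1 <= i <= m)%nat -> theta (2 * m + 1 - i)%nat = PI - theta i) ->
  in_Pi (2 * m - 1) T ->
  sphere_integral T =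
    PI / INR m * sumR (fun i => weight m theta i *
        sumR (fun j => Ttilde T (theta i) (phi m 0 j)) 0 (2 * m - 1)) 1 m
  + PI / INR m * sumR (fun i => weight m theta i *
        sumR (fun j => Ttilde T (theta i) (phi m 1 j)) 0 (2 * m - 1)) (m + 1) (2 * m).
Proof.
  intros Hm Hth Hdist _ [c HT].
  set (n := (2 * m - 1)%nat).
  pose proof (INRm_pos m Hm) as Hmp.
  assert (HTP : forall th, TP n (fun ph => Ttilde T th ph)).
  { intros th. eapply TP_ext; [|apply (poly3_TP n c th)]. intros; symmetry; apply Tt_poly; auto. }
  assert (HSFt : forall ph, SF n (fun th => Ttilde T th ph)).
  { intros ph. eapply SF_ext; [|apply (poly3_SF n c ph)]. intros; symmetry; apply Tt_poly; auto. }
  set (H0 := fun th => PI / INR m * sumR (fun j => Ttilde T th (phi m 0 j)) 0 n).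
  assert (HI0 : forall th, H0 th = RInt (fun ph => Ttilde T th ph) 0 (2 * PI)).
  { intros th. rewrite <- (TP_disc m Hm n _ 0 (le_n _) (HTP th)). unfold H0. f_equal.
    apply sumR_ext; intros; rewrite Rplus_0_l; auto. }
  assert (HI1 : forall th, PI / INR m * sumR (fun j => Ttilde T th (phi m 1 j)) 0 n = RInt (fun ph => Ttilde T th ph) 0 (2 * PI)).
  { intros th. rewrite <- (TP_disc m Hm n _ (PI / (2 * INR m)) (le_n _) (HTP th)). f_equal.
    apply sumR_ext; intros; f_equal. unfold phi. change (INR 1) with 1. change (INR 0) with 0. field. lra. }
  assert (Heven : forall th, H0 (- th) = H0 th).
  { intros th. rewrite HI0. rewrite <- (TP_disc m Hm n _ PI (le_n _) (HTP (- th))). unfold H0. f_equal.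
    apply sumR_ext; intros. unfold Ttilde. rewrite sin_neg, cos_neg, (Rplus_comm PI), neg_cos, neg_sin.
    f_equal; ring. }
  assert (HSF0 : SF n H0).
  { unfold H0. apply SF_scal.
    apply (sumR_closed (SF n) (fun j th => Ttilde T th (phi m 0 j))); [apply SF_const | apply SF_add | intros; eapply SF_ext; eauto | intros; apply HSFt]. }
  destruct HSF0 as [P [Q [HP [_ [_ HPQ]]]]].
  assert (HP0 : forall th, H0 th = P (cos th)).
  { intros th. pose proof (Heven th) as E. rewrite !HPQ in E. rewrite HPQ.
    rewrite sin_neg, cos_neg in E. lra. }
  assert (HPc := Pd_continuous _ _ HP).
  assert (Hsph : sphere_integral T = RInt P (-1) 1).
  { unfold sphere_integral.
    rewrite (RInt_ext _ (fun th => scal (-1) (scal (- sin th) (P (cos th))))).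
    2:{ intros th _.
        rewrite (RInt_ext _ (fun ph => scal (sin th) (Ttilde T th ph))).
        2:{ intros ph _. cbv beta. rewrite Rmult_comm. reflexivity. }
        rewrite (RInt_scal (V:=R_CompleteNormedModule)).
        rewrite <- HI0, HP0. change (sin th * P (cos th) = -1 * (- sin th * P (cos th))). ring.
        apply ex_RInt_continuous; intros; apply (TP_cont _ _ (HTP th)). }
    assert (Hcomp : forall x, Rmin 0 PI <= x <= Rmax 0 PI -> is_derive cos x (- sin x) /\ continuous (fun x => - sin x) x).
    { intros x _. split. auto_derive; auto. ring.
      apply continuity_pt_filterlim. apply derivable_continuous_pt. reg. }
    rewrite (RInt_scal (V:=R_CompleteNormedModule)).
    rewrite (RInt_comp P cos (fun x => - sin x)); auto.
    rewrite cos_0, cos_PI. rewrite <- (opp_RInt_swap (V:=R_CompleteNormedModule)).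
    change (-1 * - RInt P (-1) 1 = RInt P (-1) 1). ring.
    apply ex_RInt_continuous; intros; auto.
    eexists. apply (is_RInt_comp P cos (fun x => - sin x)); auto. }
  rewrite Hsph.
  assert (Hc : forall i k, (1 <= i <= 2 * m)%nat -> (1 <= k <= 2 * m)%nat -> i <> k -> cos (theta i) <> cos (theta k)).
  { intros i k Hi Hk Hik E. apply (Hdist i k Hi Hk Hik). apply cos_inj; auto.
    pose proof (Hth i Hi); lra. pose proof (Hth k Hk); lra. }
  rewrite (quad m (fun i => cos (theta i)) Hm Hc P HP).
  rewrite (sumR_Chasles _ 1 m (2 * m)) by lia.
  replace (m + 1)%nat with (S m) by lia.
  rewrite <- !sumR_scal. f_equal.
  - apply sumR_ext; intros i Hi.
    change (RInt (Lb m (fun i => cos (theta i)) i) (-1) 1) with (weight m theta i).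
    rewrite <- HP0. unfold H0. fold n. ring.
  - apply sumR_ext; intros i Hi.
    change (RInt (Lb m (fun i => cos (theta i)) i) (-1) 1) with (weight m theta i).
    rewrite <- HP0, HI0, <- HI1. fold n. ring.
Qed.
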